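(* Let $\Bbbk$ be an algebraically closed field of characteristic zero. Let $r,s,a,b$ be positive integers with $a\le b$, $r\ge s$, and let $\lambda=p/q>0$ in lowest terms, such that $B=\begin{bmatrix} r & s\\ -\lambda r & -\lambda s\\ a & b\end{bmatrix}$ is an integer matrix of rank $2$. Let $I(B)=\langle x^rz^a-y^{\lambda r},\ x^sz^b-y^{\lambda s}\rangle\subseteq\Bbbk[x,y,z]$ and $P=\mathbb{N}^2\times\mathbb{Z}$, with $\Bbbk[P]=\Bbbk[z^{\pm1}][x,y]$. Then \begin{align*} &\{(u_x,u_y)\in\mathbb{N}^2\mid \exists u_z\in\mathbb{Z} \text{ such that } (u_x,u_y,u_z) \text{ is an infinite vertex of } \mathscr{G}_P(\Bbbk[P]\cdot I(B))\}\\ =&\{(u_x,u_y)\in\mathbb{N}^2\mid \exists u_z\in\mathbb{N} \text{ such that } (u_x,u_y,u_z) \text{ is an infinite vertex of } \mathscr{G}(I(B))\}. \end{align*} Consequently, the primary component of $I(B)$ corresponding to the associated prime $\langle x,y\rangle$ is \[ (I(B):z^\infty)+\langle x^{u_x}y^{u_y}\mid \exists u_z\in\mathbb{N} \text{ such that } (u_x,u_y,u_z) \text{ is an infinite vertex of } G(B)\rangle . \]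
   Context: For a monoid $P\subseteq\mathbb{Z}^3$ and a binomial ideal $I\subseteq\Bbbk[P]$, the graph $\mathscr{G}_P(I)$ has vertex set $P$ and an edge between $u,v$ iff $x^u-\rho x^v\in I$ for some nonzero $\rho\in\Bbbk$; $\mathscr{G}(I)=\mathscr{G}_{\mathbb{N}^3}(I)$. $G(B)$ is the graph with vertex set $\mathbb{N}^3$ in which $u,v$ are adjacent iff $u-v$ or $v-u$ is a column of $B$. A vertex is infinite if its connected component has infinitely many vertices. $(I:z^\infty)$ is the saturation of $I$ with respect to $z$. *)

(* Defs.v *)
From HB Require Import structures.
From mathcomp Require Import all_boot all_order all_algebra.
From mathcomp Require Import mpoly.
Set Implicit Arguments. Unset Strict Implicit. Unset Printing Implicit Defensive.
Import Order.TTheory GRing.Theory Num.Theory.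
Local Open Scope ring_scope.

Definition vx {K : fieldType} : {mpoly K[3]} := 'X_(@Ordinal 3 0 isT).
Definition vy {K : fieldType} : {mpoly K[3]} := 'X_(@Ordinal 3 1 isT).
Definition vz {K : fieldType} : {mpoly K[3]} := 'X_(@Ordinal 3 2 isT).

Definition mono {K : fieldType} (a b c : nat) : {mpoly K[3]} :=
  vx ^+ a * vy ^+ b * vz ^+ c.

Definition in_ideal {R : comNzRingType} (S : R -> Prop) (f : R) : Prop :=
  exists (n : nat) (c g : 'I_n -> R),
    (forall i, S (g i)) /\ f = \sum_(i < n) c i * g i.

Definition gens {R : eqType} (l : seq R) : R -> Prop := fun g => g \in l.

Definition ideal_add {R : comNzRingType} (I J : R -> Prop) (f : R) : Prop :=
  exists g h, I g /\ J h /\ f = g + h.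

Definition saturation_z {K : fieldType} (I : {mpoly K[3]} -> Prop) f : Prop :=
  exists n : nat, I (vz ^+ n * f).

(* The primary component of I for the (minimal) prime <x,y>:
   the contraction of the localization, {f | exists g notin <x,y>, g f in I}. *)
Definition primary_component_xy {K : fieldType} (I : {mpoly K[3]} -> Prop) f :=
  exists g, ~ in_ideal (gens [:: vx; vy]) g /\ I (g * f).

Definition IB {K : fieldType} (r s a b lr ls : nat) : {mpoly K[3]} -> Prop :=
  in_ideal (gens [:: mono r 0 a - mono 0 lr 0; mono s 0 b - mono 0 ls 0]).

Definition edgeN {K : fieldType} (I : {mpoly K[3]} -> Prop) (u v : nat * nat * nat) :=
  exists rho : K, rho != 0 /\
    I (mono u.1.1 u.1.2 u.2 - rho *: mono v.1.1 v.1.2 v.2).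

(* Graph G_P(K[P] I) on P = N^2 x Z, where K[P] = K[z^{+-1}][x,y] is the
   localization of K[x,y,z] at z.  An element x^u - rho x^v of K[P] lies in
   K[P].I iff z^n (x^u - rho x^v) lies in I for some n with z^n x^u, z^n x^v
   polynomial monomials (unfolding of the localization). *)
Definition edgeP {K : fieldType} (I : {mpoly K[3]} -> Prop) (u v : nat * nat * int) :=
  exists rho : K, rho != 0 /\
    exists n : nat, (0 <= u.2 + n%:Z)%R /\ (0 <= v.2 + n%:Z)%R /\
      I (mono u.1.1 u.1.2 (absz (u.2 + n%:Z)) - rho *: mono v.1.1 v.1.2 (absz (v.2 + n%:Z))).

Definition edgeB (c1 c2 : int * int * int) (u v : nat * nat * nat) : Prop :=
  let d := ((u.1.1%:Z - v.1.1%:Z), (u.1.2%:Z - v.1.2%:Z), (u.2%:Z - v.2%:Z)) in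
  let md := (- d.1.1, - d.1.2, - d.2) in
  d = c1 \/ d = c2 \/ md = c1 \/ md = c2.

Inductive connected {T : Type} (e : T -> T -> Prop) (u : T) : T -> Prop :=
| conn_refl : connected e u u
| conn_step v w : connected e u v -> e v w -> connected e u w.

Definition infinite_vertex {T : eqType} (e : T -> T -> Prop) (u : T) : Prop :=
  ~ exists l : seq T, forall v, connected e u v -> v \in l.

(* Main.v *)
Require Import Defs.
From HB Require Import structures.
From mathcomp Require Import all_boot all_order all_algebra.
From mathcomp Require Import mpoly.
From mathcomp Require Import zify.
From Stdlib Require Import ClassicalEpsilon.
Import Order.TTheory GRing.Theory Num.Theory.
Local Open Scope ring_scope.
Set Implicit Arguments. Unset Strict Implicit. Unset Printing Implicit Defensive.

Definition pb (P : Prop) : bool := if excluded_middle_informative P then true else false.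
Lemma pbP P : reflect P (pb P).
Proof. rewrite /pb; case: excluded_middle_informative => h; by constructor. Qed.

Definition V := (nat * nat * nat)%type.
Definition i0 : 'I_3 := @Ordinal 3 0 isT.
Definition i1 : 'I_3 := @Ordinal 3 1 isT.
Definition i2 : 'I_3 := @Ordinal 3 2 isT.
Definition mk (u : V) : 'X_{1..3} := [multinom (nth 0%N [:: u.1.1; u.1.2; u.2] i) | i < 3].
Definition tr (m : 'X_{1..3}) : V := (m i0, m i1, m i2).
Definition addV (u w : V) : V := (u.1.1 + w.1.1, u.1.2 + w.1.2, u.2 + w.2)%N.

Lemma mk0 u : mk u i0 = u.1.1. Proof. by rewrite mnmE. Qed.
Lemma mk1 u : mk u i1 = u.1.2. Proof. by rewrite mnmE. Qed.
Lemma mk2 u : mk u i2 = u.2. Proof. by rewrite mnmE. Qed.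
Lemma trK m : mk (tr m) = m.
Proof. apply/mnmP => -[[|[|[|i]]] Hi] //; rewrite mnmE /=; congr (m _); exact: val_inj. Qed.
Lemma mkK u : tr (mk u) = u.
Proof. by case: u => [[x y] z]; rewrite /tr mk0 mk1 mk2. Qed.
Lemma trD m w : tr (m + w)%MM = addV (tr m) (tr w).
Proof. by rewrite /tr /addV !mnmDE. Qed.
Lemma mkD u w : mk (addV u w) = (mk u + mk w)%MM.
Proof. by rewrite -[u]mkK -[w]mkK -trD !trK. Qed.

Section Alg.
Variable K : fieldType.

Lemma monoE a b c : @mono K a b c = 'X_[mk (a, b, c)].
Proof.
rewrite /mono /vx /vy /vz !mpolyXn -!mpolyXD; congr 'X_[_].
apply/mnmP => -[[|[|[|i]]] Hi] //; rewrite !mnmE //= ?mulmnE !mnm1E /=; lia.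
Qed.
End Alg.

Section Ideal.
Variable R : comNzRingType.
Implicit Types (S : R -> Prop) (f g : R).

Lemma in_ideal0 S : in_ideal S 0.
Proof. exists 0%N, (fun _ => 0), (fun _ => 0); split; first by case.
by rewrite big_ord0. Qed.

Lemma in_ideal_gen S g : S g -> in_ideal S g.
Proof. move=> Hg; exists 1%N, (fun _ => 1), (fun _ => g); split => //.
by rewrite big_ord1 mul1r. Qed.

Lemma in_idealD S f g : in_ideal S f -> in_ideal S g -> in_ideal S (f + g).
Proof.
move=> [n1 [c1 [g1 [H1 ->]]]] [n2 [c2 [g2 [H2 ->]]]].
exists (n1 + n2)%N, (fun i => match split i with inl j => c1 j | inr k => c2 k end),
  (fun i => match split i with inl j => g1 j | inr k => g2 k end); split.
  by move=> i; case: split.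
rewrite big_split_ord /=; congr (_ + _); apply: eq_bigr => i _.
  by rewrite (unsplitK (inl i)).
by rewrite (unsplitK (inr i)).
Qed.

Lemma in_idealM S h f : in_ideal S f -> in_ideal S (h * f).
Proof.
move=> [n [c [g [H ->]]]]; exists n, (fun i => h * c i), g; split => //.
by rewrite mulr_sumr; apply: eq_bigr => i _; rewrite mulrA.
Qed.

Lemma in_idealN S f : in_ideal S f -> in_ideal S (- f).
Proof. by move=> H; rewrite -mulN1r; apply: in_idealM. Qed.

Lemma in_idealB S f g : in_ideal S f -> in_ideal S g -> in_ideal S (f - g).
Proof. by move=> Hf Hg; apply: in_idealD => //; apply: in_idealN. Qed.

Lemma in_ideal_sum S (I : Type) (s : seq I) (P : pred I) (F : I -> R) :
  (forall i, P i -> in_ideal S (F i)) -> in_ideal S (\sum_(i <- s | P i) F i).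
Proof.
move=> H; elim: s => [|x s IH]; first by rewrite big_nil; apply: in_ideal0.
rewrite big_cons; case: ifP => Px //; exact: in_idealD (H _ Px) IH.
Qed.

Lemma in_ideal_mono S S' f : (forall g, S g -> S' g) -> in_ideal S f -> in_ideal S' f.
Proof. by move=> H [n [c [g [Hg ->]]]]; exists n, c, g; split => // i; apply: H. Qed.

End Ideal.

Section Conn.
Variable T : Type.
Variable e : T -> T -> Prop.
Lemma conn_trans u v w : connected e u v -> connected e v w -> connected e u w.
Proof. move=> H1 H2; elim: H2 => // x y _ IH Hxy; exact: conn_step IH Hxy. Qed.
Lemma conn_edge u v : e u v -> connected e u v.
Proof. move=> H; apply: conn_step H; exact: conn_refl. Qed.
Lemma conn_sym : (forall u v, e u v -> e v u) -> forall u v, connected e u v -> connected e v u.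
Proof.
move=> Hs u v H; elim: H => [|x y _ IH Hxy]; first exact: conn_refl.
exact: conn_trans (conn_edge (Hs _ _ Hxy)) IH.
Qed.
Lemma conn_map (T' : Type) (e' : T' -> T' -> Prop) (F : T -> T') :
  (forall u v, e u v -> e' (F u) (F v)) -> forall u v, connected e u v -> connected e' (F u) (F v).
Proof.
move=> HF u v H; elim: H => [|x y _ IH Hxy]; first exact: conn_refl.
exact: conn_step IH (HF _ _ Hxy).
Qed.
End Conn.
Lemma conn_mono (T : Type) (e e' : T -> T -> Prop) :
  (forall u v, e u v -> connected e' u v) -> forall u v, connected e u v -> connected e' u v.
Proof.
move=> HF u v H; elim: H => [|x y _ IH Hxy]; first exact: conn_refl.
exact: conn_trans IH (HF _ _ Hxy).
Qed.

Lemma pair3 (A B C : Type) (x x' : A) (y y' : B) (z z' : C) :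
  (x, y, z) = (x', y', z') <-> [/\ x = x', y = y' & z = z'].
Proof. by split => [[-> -> ->]|[-> -> ->]]. Qed.

Definition E1 (u v : V) (r lr a : nat) :=
  [/\ u.1.1 = (v.1.1 + r)%N, v.1.2 = (u.1.2 + lr)%N & u.2 = (v.2 + a)%N].


Lemma fin_crit (Z : eqType) (z0 : Z) (C : nat * nat * Z -> Prop) (M : nat) :
  (forall v, C v -> (v.1.1 <= M)%N /\ (v.1.2 <= M)%N) ->
  (forall v v', C v -> C v' -> v.1.1 = v'.1.1 -> v.1.2 = v'.1.2 -> v.2 = v'.2) ->
  exists l : seq (nat * nat * Z), forall v, C v -> v \in l.
Proof.
move=> Hb Hu.
pose zc i j := match excluded_middle_informative (exists z, C (i, j, z)) with
  | left H => proj1_sig (constructive_indefinite_description _ H) | right _ => z0 end.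
exists [seq (i, j, zc i j) | i <- iota 0 M.+1, j <- iota 0 M.+1] => v Hv.
case: v Hv => [[x y] z] Hv; have [hx hy] := Hb _ Hv.
apply/allpairsP; exists (x, y); split; rewrite ?mem_iota /= ?ltnS ?hx ?hy //.
rewrite /zc; case: excluded_middle_informative => [H|H]; last by exfalso; apply: H; exists z.
case: constructive_indefinite_description => z' Hz' /=.
by have := Hu _ _ Hz' Hv erefl erefl => /= ->.
Qed.


Section Phi.
Variable K : fieldType.
Implicit Types (p g : {mpoly K[3]}) (S : V -> bool).

Definition phi S p : K := \sum_(m <- msupp p) p@_m * (S (tr m))%:R.

Lemma phi_sub S p (s : seq 'X_{1..3}) : uniq s -> {subset msupp p <= s} ->
  phi S p = \sum_(m <- s) p@_m * (S (tr m))%:R.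
Proof.
move=> Us Hs; rewrite (bigID (mem (msupp p))) /=.
rewrite [X in _ = _ + X]big1 ?addr0; last first.
  by move=> m /memN_msupp_eq0 ->; rewrite mul0r.
rewrite -big_filter /phi; apply: perm_big; apply: uniq_perm.
- exact: msupp_uniq.
- exact: filter_uniq.
move=> m; rewrite mem_filter /=; case E: (m \in msupp p) => //=.
by rewrite (Hs _ E).
Qed.

Lemma phi_ext S S' p : S =1 S' -> phi S p = phi S' p.
Proof. by move=> H; apply: eq_bigr => m _; rewrite H. Qed.

Lemma phiD S p g : phi S (p + g) = phi S p + phi S g.
Proof.
set s := undup (msupp p ++ msupp g ++ msupp (p + g)).
have Us : uniq s by apply: undup_uniq.
rewrite (@phi_sub _ _ s) ?(@phi_sub _ p s) ?(@phi_sub _ g s) //; first last.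
- by move=> m Hm; rewrite mem_undup !mem_cat Hm ?orbT.
- by move=> m Hm; rewrite mem_undup !mem_cat Hm ?orbT.
- by move=> m Hm; rewrite mem_undup !mem_cat Hm ?orbT.
by rewrite -big_split /=; apply: eq_bigr => m _; rewrite mcoeffD mulrDl.
Qed.

Lemma phiZ S c p : phi S (c *: p) = c * phi S p.
Proof.
rewrite (@phi_sub _ _ (msupp p)) ?msupp_uniq //; last exact: msuppZ_le.
by rewrite /phi mulr_sumr; apply: eq_bigr => m _; rewrite mcoeffZ mulrA.
Qed.

Lemma phi0 S : phi S 0 = 0.
Proof. by rewrite -(scale0r 0) phiZ mul0r. Qed.

Lemma phiN S p : phi S (- p) = - phi S p.
Proof. by rewrite -scaleN1r phiZ mulN1r. Qed.

Lemma phiB S p g : phi S (p - g) = phi S p - phi S g.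
Proof. by rewrite phiD phiN. Qed.

Lemma phi_sum S (I : Type) (s : seq I) (P : pred I) (F : I -> {mpoly K[3]}) :
  phi S (\sum_(i <- s | P i) F i) = \sum_(i <- s | P i) phi S (F i).
Proof.
elim: s => [|x s IH]; first by rewrite !big_nil phi0.
by rewrite !big_cons; case: ifP => _; rewrite ?phiD IH.
Qed.

Lemma phiX S m : phi S 'X_[m] = (S (tr m))%:R.
Proof. by rewrite /phi msuppX big_seq1 mcoeffX eqxx mul1r. Qed.

Lemma phi_mulX S p m : phi S (p * 'X_[m]) = phi (fun v => S (addV v (tr m))) p.
Proof.
rewrite {1}(mpolyE p) mulr_suml phi_sum; apply: eq_bigr => w _.
by rewrite -scalerAl -mpolyXD phiZ phiX trD.
Qed.

Lemma phi_mul S g p :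
  phi S (g * p) = \sum_(w <- msupp g) g@_w * phi (fun v => S (addV v (tr w))) p.
Proof.
rewrite {1}(mpolyE g) mulr_suml phi_sum; apply: eq_bigr => w _.
by rewrite -scalerAl mulrC phiZ phi_mulX.
Qed.

End Phi.
Section Graph.
Variables (r s a b lr ls p q : nat).
Hypotheses (Hlr : (lr * q = p * r)%N) (Hls : (ls * q = p * s)%N) (Hp : (0 < p)%N) (Hq : (0 < q)%N).
Let c1 : int * int * int := (r%:Z, - lr%:Z, a%:Z).
Let c2 : int * int * int := (s%:Z, - ls%:Z, b%:Z).
Let eB := edgeB c1 c2.
Let conB := connected eB.
Definition eN u v := [\/ E1 u v r lr a, E1 u v s ls b, E1 v u r lr a | E1 v u s ls b].

Lemma eBE u v : eB u v <-> eN u v.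
Proof.
case: u v => [[x y] z] [[x' y'] z']; rewrite /eB /edgeB /eN /E1 /c1 /c2 /=.
rewrite !pair3; split.
  case=> [|[|[|]]] [h1 h2 h3]; [constructor 1|constructor 2|constructor 3|constructor 4]; split; lia.
case=> -[h1 h2 h3]; [left|right;left|right;right;left|right;right;right]; split; lia.
Qed.

Lemma eB_sym u v : eB u v -> eB v u.
Proof. by rewrite !eBE; case=> H; [constructor 3|constructor 4|constructor 1|constructor 2]. Qed.

Lemma conB_sym u v : conB u v -> conB v u.
Proof. exact: conn_sym eB_sym u v. Qed.

Lemma conB_trans u v w : conB u v -> conB v w -> conB u w.
Proof. move=> H1 H2; exact: (conn_trans H1 H2). Qed.

Lemma eB_shift w u v : eB u v -> eB (addV u w) (addV v w).
Proof.
rewrite !eBE /eN /E1 /addV /=.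
by case=> -[h1 h2 h3]; [constructor 1|constructor 2|constructor 3|constructor 4]; split; lia.
Qed.

Lemma conB_shift w u v : conB u v -> conB (addV u w) (addV v w).
Proof. move=> H; exact: (@conn_map _ eB _ eB (fun x => addV x w) (@eB_shift w) u v H). Qed.

Definition L (u : V) := (p * u.1.1 + q * u.1.2)%N.

Lemma conB_L u v : conB u v -> L u = L v.
Proof.
elim => // x y _ IH /eBE; rewrite IH /L /E1; case=> -[h1 h2 h3]; nia.
Qed.

Definition infB u := infinite_vertex eB u.

Lemma infB_conn u v : conB u v -> infB v -> infB u.
Proof.
move=> Huv Hv [l Hl]; apply: Hv; exists l => w Hw; apply: Hl; exact: conB_trans Huv Hw.
Qed.

Definition subV (u w : V) : V := (u.1.1 - w.1.1, u.1.2 - w.1.2, u.2 - w.2)%N.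
Lemma addVK w u : subV (addV u w) w = u.
Proof. by case: u => [[x y] z]; rewrite /subV /addV /= !addnK. Qed.

Lemma infB_shift w u : infB u -> infB (addV u w).
Proof.
move=> Hu [l Hl]; apply: Hu; exists (map (subV^~ w) l) => v Hv.
by rewrite -(addVK w v); apply: map_f; apply: Hl; apply: conB_shift.
Qed.

Definition zV (k : nat) : V := (0, 0, k)%N.

Lemma periodic_inf w k : (0 < k)%N -> conB w (addV w (zV k)) -> infB w.
Proof.
move=> Hk Hw.
have Hj j : conB w (addV w (zV (j * k))).
  elim: j => [|j IH]; first by rewrite mul0n /addV /zV /= !addn0; case: (w) => [[??]?]; apply: conn_refl.
  apply: conB_trans IH _.
  have -> : addV w (zV (j.+1 * k)) = addV (addV w (zV k)) (zV (j*k)).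
    by case: (w) => [[x y] z]; rewrite /addV /zV /=; congr (_,_,_); lia.
  exact: conB_shift.
move=> [l Hl].
set Z := (\max_(x <- l) x.2)%N.
have := Hl _ (Hj Z.+1) => Hin.
have := @leq_bigmax_seq _ l xpredT (fun x => x.2) _ Hin isT; rewrite -/Z /addV /zV /=.
have : (Z.+1 <= Z.+1 * k)%N by rewrite leq_pmulr.
lia.
Qed.

Lemma periodic_or u :
  infB u -> exists w k, [/\ (0 < k)%N, conB u w & conB w (addV w (zV k))].
Proof.
move=> Hu; apply: NNPP => Hn; apply: Hu.
apply: (@fin_crit _ 0%N _ (L u)).
  move=> v /conB_L; rewrite /L => ->; split; [apply: leq_trans (leq_addr _ _)|apply: leq_trans (leq_addl _ _)]; exact: leq_pmull.
move=> v v' Hv Hv' E1 E2; apply: NNPP => Hne.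
wlog lt : v v' Hv Hv' E1 E2 Hne / (v.2 < v'.2)%N.
  move=> W; case: (ltngtP v.2 v'.2) => h; first exact: W h.
    by apply: (W v' v) => // ?; apply: Hne.
  by apply: Hne.
apply: Hn; exists v, (v'.2 - v.2)%N; split; first by rewrite subn_gt0.
  exact: Hv.
have -> : addV v (zV (v'.2 - v.2)) = v'.
  by move: E1 E2 lt; case: (v) (v') => [[x y] z] [[x' y'] z'] /= -> -> ?; rewrite /addV /zV /=; congr (_,_,_); lia.
exact: conB_trans (conB_sym Hv) Hv'.
Qed.

Variable K : fieldType.
Let I := @IB K r s a b lr ls.
Definition monoV (u : V) : {mpoly K[3]} := mono u.1.1 u.1.2 u.2.

Lemma monoVE u : monoV u = 'X_[mk u].
Proof. by case: u => [[x y] z]; rewrite /monoV monoE. Qed.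

Lemma monoV_add u w : monoV (addV u w) = monoV u * monoV w.
Proof. by rewrite !monoVE mkD mpolyXD. Qed.

Lemma I_gen1 : I (mono r 0 a - mono 0 lr 0).
Proof. by apply: in_ideal_gen; rewrite /gens inE eqxx. Qed.
Lemma I_gen2 : I (mono s 0 b - mono 0 ls 0).
Proof. by apply: in_ideal_gen; rewrite /gens !inE eqxx orbT. Qed.

Lemma E1_I r' lr' a' u v : I (mono r' 0 a' - mono 0 lr' 0) -> E1 u v r' lr' a' ->
  I (monoV u - monoV v).
Proof.
move=> Hg [h1 h2 h3].
have [eu ev] : u = addV (v.1.1, u.1.2, v.2) (r', 0, a')%N /\ v = addV (v.1.1, u.1.2, v.2) (0, lr', 0)%N.
  by move: h1 h2 h3; case: u v => [[??]?] [[??]?] /= *; rewrite /addV /=; split; congr (_,_,_); lia.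
move: eu ev; move: (v.1.1, u.1.2, v.2) => w -> ->.
by rewrite !monoV_add -mulrBr; apply: in_idealM.
Qed.

Lemma eB_I u v : eB u v -> I (monoV u - monoV v).
Proof.
move/eBE => [H|H|H|H].
- exact: E1_I I_gen1 H.
- exact: E1_I I_gen2 H.
- by rewrite -opprB; apply: in_idealN; apply: E1_I I_gen1 H.
- by rewrite -opprB; apply: in_idealN; apply: E1_I I_gen2 H.
Qed.

Lemma conB_I u v : conB u v -> I (monoV u - monoV v).
Proof.
elim => [|x y _ IH Hxy]; first by rewrite subrr; apply: in_ideal0.
by rewrite -(subrKA (monoV x)); apply: in_idealD IH (eB_I Hxy).
Qed.

Lemma phi_I (S : V -> bool) f : (forall u v, eB u v -> S u = S v) -> I f -> phi S f = 0.
Proof.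
move=> HS [n [c [g [Hg ->]]]]; rewrite phi_sum big1 // => i _.
have E : forall r' lr' a', (forall v, eB (addV v (r', 0, a')%N) (addV v (0, lr', 0)%N)) ->
    phi S (c i * (mono r' 0 a' - mono 0 lr' 0)) = 0.
  move=> r' lr' a' He.
  rewrite mulrBr phiB !monoE !phi_mulX; apply/eqP; rewrite subr_eq0; apply/eqP; apply: phi_ext => v.
  by rewrite !mkK; apply: HS.
move: (Hg i); rewrite /gens !inE => /orP [] /eqP ->; apply: E => v; apply/eBE.
  by constructor 1; rewrite /E1 /addV /=; split; lia.
by constructor 2; rewrite /E1 /addV /=; split; lia.
Qed.

Lemma edgeN_conB u v : edgeN I u v -> conB u v.
Proof.
move=> [rho [Hrho HI]].
have Hcl : forall x y, eB x y -> pb (conB u x) = pb (conB u y).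
  move=> x y Hxy; apply/idP/idP => /pbP H; apply/pbP.
    exact: conB_trans H (conn_edge Hxy).
  exact: conB_trans H (conn_edge (eB_sym Hxy)).
have := @phi_I (fun x => pb (conB u x)) _ Hcl HI.
have Hrefl : pb (conB u u) by apply/pbP; exact: conn_refl.
rewrite phiB phiZ -/(monoV u) -/(monoV v) !monoVE !phiX !mkK Hrefl.
case: (pbP (conB u v)) => // _; rewrite mulr0 subr0 => /eqP; rewrite oner_eq0 //.
Qed.

Lemma conB_edgeN u v : conB u v -> edgeN I u v.
Proof.
move=> H; exists 1; split; first exact: oner_neq0.
by rewrite scale1r; apply: conB_I.
Qed.

Lemma connN_conB u v : connected (edgeN I) u v <-> conB u v.
Proof.
split.
  by apply: conn_mono => x y /edgeN_conB.
apply: conn_mono => x y Hxy; apply: conn_edge; apply: conB_edgeN; exact: conn_edge Hxy.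
Qed.

Lemma infN_infB u : infinite_vertex (edgeN I) u <-> infB u.
Proof.
split => H [l Hl]; apply: H; exists l => v Hv; apply: Hl; apply/connN_conB => //.
Qed.

Definition VP := (nat * nat * int)%type.
Definition toV (u : VP) (n : nat) : V := (u.1.1, u.1.2, absz (u.2 + n%:Z)).
Definition relP (u v : VP) := exists n : nat,
  [/\ (0 <= u.2 + n%:Z)%R, (0 <= v.2 + n%:Z)%R & conB (toV u n) (toV v n)].

Lemma toV_shift u n k : (0 <= u.2 + n%:Z)%R -> toV u (n + k) = addV (toV u n) (zV k).
Proof.
rewrite /toV /addV /zV /= !addn0 => h; congr (_,_,_).
move: h; case: u => [[x y] z] /= h.
have -> : (z + (n + k)%N%:Z = (z + n%:Z) + k%:Z)%R by rewrite PoszD addrA.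
by move: h; case: (z + n%:Z)%R.
Qed.

Lemma conB_toV_shift u v n k : (0 <= u.2 + n%:Z)%R -> (0 <= v.2 + n%:Z)%R ->
  conB (toV u n) (toV v n) -> conB (toV u (n + k)) (toV v (n + k)).
Proof. by move=> hu hv H; rewrite !toV_shift //; apply: conB_shift. Qed.

Lemma nonneg_shift (z : int) n k : (0 <= z + n%:Z)%R -> (0 <= z + (n + k)%N%:Z)%R.
Proof. by rewrite PoszD addrA => h; apply: addr_ge0. Qed.

Lemma relP_trans u v w : relP u v -> relP v w -> relP u w.
Proof.
move=> [n [h1 h2 H]] [m [h3 h4 H']]; exists (n + m)%N; split.
- exact: nonneg_shift.
- by rewrite addnC; apply: nonneg_shift.
apply: conB_trans (conB_toV_shift m h1 h2 H) _.
by rewrite addnC; apply: conB_toV_shift.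
Qed.

Lemma relP_refl u : relP u u.
Proof.
have h : (0 <= u.2 + (absz u.2)%:Z)%R by case: (u.2) => k //=; rewrite NegzE addNr.
by exists (absz u.2); split => //; apply: conn_refl.
Qed.

Lemma edgeP_relP u v : edgeP I u v -> relP u v.
Proof.
move=> [rho [Hrho [n [h1 [h2 HI]]]]]; exists n; split => //.
by apply: edgeN_conB; exists rho.
Qed.

Lemma connP_relP u v : connected (edgeP I) u v -> relP u v.
Proof.
elim => [|x y _ IH Hxy]; first exact: relP_refl.
exact: relP_trans IH (edgeP_relP Hxy).
Qed.

Definition liftV (x : V) : VP := (x.1.1, x.1.2, Posz x.2).

Lemma eB_edgeP x y : eB x y -> edgeP I (liftV x) (liftV y).
Proof.
move=> H; exists 1; split; first exact: oner_neq0.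
exists 0%N; split => //; split => //; rewrite scale1r /= !addn0.
exact: (conB_I (conn_edge H)).
Qed.

Lemma part1_back ux uy (uz : nat) :
  infinite_vertex (edgeN I) (ux, uy, uz) -> infinite_vertex (edgeP I) (ux, uy, Posz uz).
Proof.
move/infN_infB => Hinf [l Hl]; apply: Hinf.
exists (map (fun x : VP => (x.1.1, x.1.2, absz x.2)) l) => v Hv.
have := Hl (liftV v) (conn_map eB_edgeP Hv).
move/(map_f (fun x : VP => (x.1.1, x.1.2, absz x.2))).
by case: (v) => [[??]?].
Qed.

Lemma part1_fwd (u : VP) :
  infinite_vertex (edgeP I) u -> exists uz : nat, infinite_vertex (edgeN I) (u.1.1, u.1.2, uz).
Proof.
move=> Hu; apply: NNPP => Hn; apply: Hu.
apply: (@fin_crit _ 0 _ (L (u.1.1, u.1.2, 0%N))).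
  move=> v /connP_relP [n [_ _ /conB_L]]; rewrite /L /toV /= => ->.
  split; [apply: leq_trans (leq_addr _ _)|apply: leq_trans (leq_addl _ _)]; exact: leq_pmull.
move=> v v' Hv Hv' E1 E2; apply: NNPP => Hne.
wlog lt : v v' Hv Hv' E1 E2 Hne / (v.2 < v'.2)%R.
  move=> W; case: (ltgtP v.2 v'.2) => h; first exact: W h.
    by apply: (W v' v) => // ?; apply: Hne.
  by apply: Hne.
have [n [h1 h2 H]] := connP_relP Hv.
have [n' [h1' h2' H']] := connP_relP Hv'.
have HA := conB_toV_shift n' h1 h2 H.
have HB := conB_toV_shift n h1' h2' H'; rewrite addnC in HB.
set N := (n + n')%N in HA HB.
have hv : (0 <= v.2 + N%:Z)%R by apply: nonneg_shift.
have hv' : (0 <= v'.2 + N%:Z)%R by rewrite /N addnC; apply: nonneg_shift.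
have Hk : toV v' N = addV (toV v N) (zV (absz (v'.2 - v.2))).
  move: hv hv' lt; rewrite /toV /addV /zV /= E1 E2 !addn0 => hv hv' lt; congr (_,_,_).
  lia.
apply: Hn; exists (absz (u.2 + N%:Z)); apply/infN_infB.
apply: (infB_conn HA).
apply: (@periodic_inf _ (absz (v'.2 - v.2))).
  by rewrite absz_gt0 subr_eq0 eq_sym; apply: contraTneq lt => ->; rewrite ltxx.
rewrite -Hk; exact: conB_trans (conB_sym HA) HB.
Qed.

Definition good (v : V) := exists uz, infB (v.1.1, v.1.2, uz).

Lemma addVzz m x y : addV (addV m (zV x)) (zV y) = addV m (zV (x + y)).
Proof. by rewrite /addV /zV /= !addn0 addnA. Qed.

Lemma addVC3 m w x : addV (addV m w) (zV x) = addV (addV m (zV x)) w.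
Proof. by rewrite /addV /zV /= !addn0; congr (_,_,_); lia. Qed.

Lemma good_conB u v : conB u v -> good u -> good v.
Proof.
move=> H [uz Hz]; exists (v.2 + uz)%N.
have H1 := infB_shift (w:=zV u.2) Hz.
have H2 := conB_shift (zV uz) H.
have E : addV (u.1.1, u.1.2, uz) (zV u.2) = addV u (zV uz).
  by case: (u) => [[??]?]; rewrite /addV /zV /= !addn0 addnC.
rewrite E in H1.
have E' : addV v (zV uz) = (v.1.1, v.1.2, (v.2 + uz)%N).
  by case: (v) => [[??]?]; rewrite /addV /zV /= !addn0.
rewrite -E'; apply: infB_conn (conB_sym H2) H1.
Qed.

Lemma good_up u w : good u -> good (addV u w).
Proof.
move=> [uz Hz]; exists (uz + w.2)%N.
by have := infB_shift (w:=w) Hz; rewrite /addV /=.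
Qed.

Lemma good_z u k : good (addV u (zV k)) <-> good u.
Proof. by rewrite /good /addV /zV /= !addn0. Qed.

Definition Rr (m v : V) (d : int) := exists a' b' : nat,
  (a'%:Z - b'%:Z = d)%R /\ conB (addV m (zV a')) (addV v (zV b')).
Definition ap m v := Rr m v 0.

Lemma apE m v : ap m v <-> exists n, conB (addV m (zV n)) (addV v (zV n)).
Proof.
split => [[x [y [h H]]]|[n H]]; last by exists n, n; rewrite subrr.
by have /eqP := h; rewrite subr_eq0 => /eqP [E]; subst y; exists x.
Qed.

Lemma Rr_ap m m' v d : ap m m' -> Rr m v d -> Rr m' v d.
Proof.
move=> /apE [n Hn] [x [y [h H]]]; exists (n + x)%N, (n + y)%N; split.
  by rewrite !PoszD opprD addrACA subrr add0r.
have A := conB_shift (zV x) Hn; have B := conB_shift (zV n) H.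
rewrite !addVzz in A B; rewrite [(x + n)%N]addnC [(y + n)%N]addnC in B.
exact: conB_trans (conB_sym A) B.
Qed.

Lemma conB_ap m m' : conB m m' -> ap m m'.
Proof. by move=> H; apply/apE; exists 0%N; apply: conB_shift. Qed.

Lemma ap_refl m : ap m m.
Proof. by apply: conB_ap; apply: conn_refl. Qed.

Lemma ap_sym m m' : ap m m' -> ap m' m.
Proof. by move/apE => [n H]; apply/apE; exists n; apply: conB_sym. Qed.

Lemma ap_trans m m' m'' : ap m m' -> ap m' m'' -> ap m m''.
Proof. by move=> H1 H2; apply: Rr_ap (ap_sym H1) H2. Qed.

Lemma ap_add m m' w : ap m m' -> ap (addV m w) (addV m' w).
Proof.
move/apE => [n H]; apply/apE; exists n; rewrite !addVC3; exact: conB_shift.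
Qed.

Lemma Rr_zshift m v d k : Rr (addV m (zV k)) v d <-> Rr m v (d + k%:Z)%R.
Proof.
split => [[x [y [h H]]]|[x [y [h H]]]].
  exists (k + x)%N, y; split; first by rewrite PoszD -h; lia.
  by rewrite -addVzz.
case: (leqP k x) => hk.
  exists (x - k)%N, y; split; first by rewrite -(subnK hk) in h; lia.
  by rewrite addVzz subnKC.
exists 0%N, (y + (k - x))%N; split; first by lia.
have := conB_shift (zV (k - x)) H; rewrite !addVzz subnKC ?(ltnW hk) //.
by rewrite addn0.
Qed.

Lemma Rr_L m v d : Rr m v d -> L m = L v.
Proof. by move=> [x [y [_ /conB_L]]]; rewrite /L /addV /zV /= !addn0. Qed.

Lemma Rr_good m v d : Rr m v d -> good m -> good v.
Proof.
move=> [x [y [_ H]]] /(good_z _ x).2 Hg.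
exact/(good_z _ y)/(good_conB H Hg).
Qed.

Lemma periodic_good w k : (0 < k)%N -> conB w (addV w (zV k)) -> good w.
Proof.
move=> hk H; exists w.2; have := periodic_inf hk H.
by case: (w) => [[??]?].
Qed.

Lemma Rr_uniq m v d d' : ~ good v -> Rr m v d -> Rr m v d' -> d = d'.
Proof.
move=> Hb [x [y [h H]]] [x' [y' [h' H']]]; apply: NNPP => Hne.
have HA := conB_shift (zV x') H; have HB := conB_shift (zV x) H'.
rewrite !addVzz in HA HB; rewrite [(x' + x)%N]addnC in HB.
have HC := conB_trans (conB_sym HA) HB.
case: (ltngtP (y + x') (y' + x)) => hlt.
- apply: Hb; apply/(good_z _ (y + x')); apply: (@periodic_good _ (y' + x - (y + x'))).
    by rewrite subn_gt0.
  rewrite addVzz subnKC; [exact: HC | exact: ltnW].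
- apply: Hb; apply/(good_z _ (y' + x)); apply: (@periodic_good _ (y + x' - (y' + x))).
    by rewrite subn_gt0.
  rewrite addVzz subnKC; [exact: conB_sym HC | exact: ltnW].
- apply: Hne; rewrite -h -h'; clear -hlt; lia.
Qed.

Lemma phi_filter (S : V -> bool) (f : {mpoly K[3]}) : phi S f = \sum_(m <- msupp f | S (tr m)) f@_m.
Proof.
rewrite /phi [RHS]big_mkcond /=; apply: eq_bigr => m _.
by case: (S (tr m)); rewrite ?mulr1 ?mulr0.
Qed.

Lemma ap_symb x y : pb (ap x y) = pb (ap y x).
Proof. by apply/idP/idP => /pbP H; apply/pbP; apply: ap_sym. Qed.

Lemma class_sum (S : V -> bool) (sq : seq 'X_{1..3}) (c : 'X_{1..3} -> K) :
  (forall x y, ap x y -> S x -> S y) ->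
  (forall m, m \in sq -> S (tr m) -> \sum_(m' <- sq | pb (ap (tr m') (tr m))) c m' = 0) ->
  \sum_(m <- sq | S (tr m)) c m = 0.
Proof.
move=> HS; have [n] := ubnP (size sq); elim: n sq => // n IH sq Hs Hc.
case: sq Hs Hc => [|m0 sq'] Hs Hc; first by rewrite big_nil.
pose P0 := fun m' : 'X_{1..3} => pb (ap (tr m') (tr m0)).
have Hsz : (size [seq m <- sq' | ~~ P0 m] < n)%N.
  by rewrite size_filter; apply: leq_ltn_trans (count_size _ _) _.
case HS0: (S (tr m0)).
- have H0 := Hc m0 (mem_head _ _) HS0.
  rewrite big_cons (_ : pb (ap (tr m0) (tr m0)) = true) in H0; last by apply/pbP; apply: ap_refl.
  rewrite big_cons HS0 (bigID P0) /=.
  rewrite (eq_bigl P0); last first.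
    move=> m; rewrite /P0; case E: (pb (ap (tr m) (tr m0))); rewrite ?andbF //.
    by rewrite andbT; apply: (HS (tr m0)); [apply: ap_sym; apply/pbP|].
  rewrite addrA H0 add0r.
  rewrite (eq_bigl (fun i => ~~ P0 i && S (tr i))); last by move=> i; rewrite andbC.
  rewrite -big_filter_cond; apply: IH => // m.
  rewrite mem_filter => /andP [Hm0 Hm] Sm.
  have Hm' : m \in m0 :: sq' by rewrite inE Hm orbT.
  have := Hc m Hm' Sm.
  rewrite big_cons (_ : pb (ap (tr m0) (tr m)) = false); last first.
    by apply/negbTE; rewrite ap_symb.
  rewrite (bigID P0) /= big1 ?add0r; last first.
    move=> m' /andP [/pbP H1 /pbP H2]; exfalso; move/negP: Hm0; apply; apply/pbP.
    exact: ap_trans (ap_sym H1) H2.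
  rewrite !big_filter_cond => H; apply: etrans H; apply: eq_bigl => i; exact: andbC.
- rewrite big_cons HS0; apply: IH => // m Hm Sm.
  have Hm' : m \in m0 :: sq' by rewrite inE Hm orbT.
  have := Hc m Hm' Sm.
  rewrite big_cons (_ : pb (ap (tr m0) (tr m)) = false) //.
  apply/negbTE/negP => /pbP H; move/negP: HS0; apply.
  by apply: HS Sm; apply: ap_sym.
Qed.

Definition satz (x : {mpoly K[3]}) := exists n : nat, I (vz ^+ n * x).

Lemma satz_scale c x : satz x -> satz (c *: x).
Proof.
move=> [n H]; exists n; rewrite -mul_mpolyC mulrCA; exact: in_idealM.
Qed.

Lemma satz_add x y : satz x -> satz y -> satz (x + y).
Proof.
move=> [n1 H1] [n2 H2]; exists (n1 + n2)%N; rewrite mulrDr exprD.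
apply: in_idealD.
  by rewrite [vz ^+ n1 * _]mulrC -mulrA; apply: in_idealM.
by rewrite -mulrA; apply: in_idealM.
Qed.

Lemma satz0 : satz 0.
Proof. by exists 0%N; rewrite mulr0; apply: in_ideal0. Qed.

Lemma satz_sum (J : Type) (sq : seq J) (P : pred J) (F : J -> {mpoly K[3]}) :
  (forall i, P i -> satz (F i)) -> satz (\sum_(i <- sq | P i) F i).
Proof.
move=> H; elim: sq => [|x sq IH]; first by rewrite big_nil; apply: satz0.
by rewrite big_cons; case: ifP => Px //; apply: satz_add (H _ Px) IH.
Qed.

Lemma monoV_z n : monoV (zV n) = vz ^+ n.
Proof. by rewrite /monoV /mono /= !expr0 !mul1r. Qed.

Lemma ap_satz m m' : ap (tr m) (tr m') -> satz ('X_[m] - 'X_[m']).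
Proof.
move=> /apE [n H]; exists n; have := conB_I H.
by rewrite !monoV_add monoV_z !monoVE !trK -mulrBl mulrC.
Qed.

Lemma stepA (sq : seq 'X_{1..3}) (c : 'X_{1..3} -> K) :
  (forall m, m \in sq -> \sum_(m' <- sq | pb (ap (tr m') (tr m))) c m' = 0) ->
  satz (\sum_(m <- sq) c m *: 'X_[m]).
Proof.
have [n] := ubnP (size sq); elim: n sq => // n IH sq Hs Hc.
case: sq Hs Hc => [|m0 sq'] Hs Hc; first by rewrite big_nil; apply: satz0.
pose P0 := fun m' : 'X_{1..3} => pb (ap (tr m') (tr m0)).
have H0 := Hc m0 (mem_head _ _).
rewrite big_cons (_ : pb (ap (tr m0) (tr m0)) = true) in H0; last by apply/pbP; apply: ap_refl.
rewrite big_cons (bigID P0) /= addrA.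
have E : c m0 *: 'X_[m0] + \sum_(i <- sq' | P0 i) c i *: 'X_[i] =
    \sum_(i <- sq' | P0 i) c i *: ('X_[i] - 'X_[m0]).
  have -> : c m0 = - \sum_(j <- sq' | P0 j) c j by apply/eqP; rewrite -addr_eq0 H0.
  rewrite scaleNr scaler_suml.
  under [RHS]eq_bigr do rewrite scalerBr.
  by rewrite sumrB addrC.
rewrite E; apply: satz_add.
  apply: satz_sum => i /pbP Hi; apply: satz_scale; exact: ap_satz.
rewrite -big_filter; apply: IH.
  by rewrite size_filter; apply: leq_ltn_trans (count_size _ _) _.
move=> m; rewrite mem_filter => /andP [Hm0 Hm].
have Hm' : m \in m0 :: sq' by rewrite inE Hm orbT.
have := Hc m Hm'.
rewrite big_cons (_ : pb (ap (tr m0) (tr m)) = false); last first.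
  by apply/negbTE; rewrite ap_symb.
rewrite (bigID P0) /= big1 ?add0r; last first.
  move=> m' /andP [/pbP H1 /pbP H2]; exfalso; move/negP: Hm0; apply; apply/pbP.
  exact: ap_trans (ap_sym H1) H2.
rewrite big_filter_cond => H; apply: etrans H; apply: eq_bigl => i; exact: andbC.
Qed.

Lemma seq_max (sq : seq int) : sq != [::] -> exists2 x, x \in sq & forall y, y \in sq -> (y <= x)%R.
Proof.
elim: sq => // x sq IH _; case: (altP (sq =P [::])) => [->|Hne].
  by exists x; rewrite ?mem_head // => y; rewrite inE => /eqP ->.
have [z Hz Hmax] := IH Hne.
case: (leP x z) => h.
  exists z; first by rewrite inE Hz orbT.
  by move=> y; rewrite inE => /orP [/eqP ->|/Hmax].
exists x; first exact: mem_head.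
move=> y; rewrite inE => /orP [/eqP ->//|/Hmax Hy]; exact: le_trans Hy (ltW h).
Qed.

Lemma L_tr_pos (w : 'X_{1..3}) : ~~ ((w i0 == 0%N) && (w i1 == 0%N)) -> (0 < L (tr w))%N.
Proof.
rewrite /L /tr /= negb_and => /orP [h|h].
  by apply: ltn_addr; rewrite muln_gt0 Hp lt0n.
by apply: ltn_addl; rewrite muln_gt0 Hq lt0n.
Qed.

Lemma L_add u w : L (addV u w) = (L u + L w)%N.
Proof. rewrite /L /addV /=; lia. Qed.

Lemma tr_zonly (w : 'X_{1..3}) : (w i0 == 0%N) && (w i1 == 0%N) -> tr w = zV (w i2).
Proof. by rewrite /tr /zV => /andP [/eqP -> /eqP ->]. Qed.

Section StepB.
Variables (f g : {mpoly K[3]}).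
Hypothesis Hgf : I (g * f).
Hypothesis Hg0 : exists k, g@_(mk (0, 0, k)%N) != 0.

Let A v d := phi (fun x => pb (Rr x v d)) f.

Let IHl (l : nat) := forall v, ~ good v -> (L v < l)%N -> forall d, A v d = 0.

Lemma phi_closed_zero l : IHl l -> forall S : V -> bool,
  (forall x y, ap x y -> S x -> S y) -> (forall x, S x -> ~ good x /\ (L x < l)%N) ->
  phi S f = 0.
Proof.
move=> IH S HS Hb; rewrite phi_filter; apply: class_sum => // m _ Sm.
have [Hg HL] := Hb _ Sm.
by have := IH _ Hg HL 0; rewrite /A phi_filter.
Qed.

Lemma stepB_level l : IHl l -> forall v, ~ good v -> L v = l -> forall d, A v d = 0.
Proof.
move=> IH v Hv HL.
pose zo (w : 'X_{1..3}) := (w i0 == 0%N) && (w i1 == 0%N).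
have Eq : forall d', \sum_(w <- msupp g | zo w) g@_w * A v (d' + (w i2)%:Z)%R = 0.
  move=> d'.
  have Hcl : forall x y, eB x y -> pb (Rr x v d') = pb (Rr y v d').
    move=> x y Hxy; apply/idP/idP => /pbP H; apply/pbP; apply: Rr_ap H.
      by apply: conB_ap; apply: conn_edge.
    by apply: conB_ap; apply: conn_edge; apply: eB_sym.
  have := phi_I Hcl Hgf; rewrite phi_mul (bigID zo) /= [X in _ + X]big1 ?addr0.
    move=> HH; rewrite -[RHS]HH; apply: eq_bigr => w Hw; congr (_ * _).
    apply: phi_ext => x; rewrite (tr_zonly Hw).
    by apply/idP/idP => /pbP H; apply/pbP; [apply/Rr_zshift|apply/Rr_zshift].
  move=> w Hw; apply/eqP; rewrite mulf_eq0; apply/orP; right; apply/eqP.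
  apply: (phi_closed_zero IH).
    move=> x y Hxy /pbP H; apply/pbP; apply: Rr_ap H; exact: ap_add.
  move=> x /pbP H; split.
    move=> Hgx; apply: Hv; exact: (Rr_good H (good_up (tr w) Hgx)).
  have := Rr_L H; rewrite L_add HL => <-.
  by rewrite -[X in (X < _)%N]addn0 ltn_add2l; apply: L_tr_pos.
apply: NNPP => Hne.
have [d0 Hd0] : exists d, A v d != 0.
  by apply: NNPP => H; apply: Hne => d; apply/eqP; apply: NNPP => H'; apply: H; exists d; apply/negP.
pose dm (m : 'X_{1..3}) : int := match excluded_middle_informative (exists d, Rr (tr m) v d) with
  | left H => proj1_sig (constructive_indefinite_description _ H) | right _ => 0 end.
have HD : forall d, A v d != 0 -> d \in map dm (msupp f).
  move=> d Hd; have [m Hm HR] : exists2 m, m \in msupp f & Rr (tr m) v d.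
    apply: NNPP => H; move/eqP: Hd; apply; rewrite /A phi_filter big1_seq //.
    by move=> m /andP [/pbP HR Hm]; exfalso; apply: H; exists m.
  have -> : d = dm m.
    rewrite /dm; case: excluded_middle_informative => [H|H]; last by exfalso; apply: H; exists d.
    by case: constructive_indefinite_description => d' Hd' /=; apply: Rr_uniq Hv HR Hd'.
  exact: map_f.
pose NZ := [seq d <- map dm (msupp f) | A v d != 0].
have [dmax Hdmax Hmax] : exists2 x, x \in NZ & forall y, y \in NZ -> (y <= x)%R.
  apply: seq_max; apply/eqP => H.
  have : d0 \in NZ by rewrite mem_filter Hd0 HD.
  by rewrite H.
have Hdmax' : A v dmax != 0 by move: Hdmax; rewrite mem_filter => /andP [].
have Hgt : forall y, (dmax < y)%R -> A v y = 0.
  move=> y hy; apply/eqP; apply: NNPP => /negP Hy.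
  have : y \in NZ by rewrite mem_filter Hy HD.
  by move/Hmax; rewrite leNgt hy.
have [kmin Hkmin Hkmin_min] := ex_minnP Hg0.
set w0 := mk (0, 0, kmin)%N.
have Hw0 : w0 \in msupp g by rewrite mcoeff_msupp.
have zw0 : zo w0 by rewrite /zo mk0 mk1.
have := Eq (dmax - kmin%:Z)%R.
rewrite -big_filter (bigD1_seq w0) ?mem_filter ?zw0 ?filter_uniq ?msupp_uniq //=.
rewrite big1_seq ?addr0.
  rewrite mk2 subrK => /eqP; rewrite mulf_eq0.
  by rewrite (negbTE Hkmin) (negbTE Hdmax').
move=> w /andP [Hne0 Hwin]; move: Hwin; rewrite mem_filter => /andP [zw Hw].
rewrite Hgt ?mulr0 //.
have Hwk : w = mk (0, 0, w i2)%N by rewrite -[LHS]trK (tr_zonly zw).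
have Hle : (kmin <= w i2)%N.
  by apply: Hkmin_min; rewrite -Hwk -mcoeff_msupp.
have Hneq : w i2 != kmin by apply: contraNneq Hne0 => E; rewrite Hwk E.
rewrite -[X in (X < _)%R](subrK kmin%:Z) ltrD2l ltz_nat ltn_neqAle eq_sym Hneq Hle.
by [].
Qed.

Lemma stepB_all v : ~ good v -> A v 0 = 0.
Proof.
move=> Hv; suff H : forall l, IHl l by apply: (H (L v).+1).
elim => [|l IH]; first by move=> x _ //.
move=> x Hx; rewrite ltnS leq_eqVlt => /orP [/eqP HL|HL].
  exact: stepB_level IH x Hx HL.
exact: IH.
Qed.

End StepB.

Lemma Xsplit (m : 'X_{1..3}) (i : 'I_3) : (0 < m i)%N -> 'X_[m] = 'X_i * 'X_[(m - U_(i))%MM] :> {mpoly K[3]}.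
Proof.
move=> h; rewrite -mpolyXD; congr 'X_[_]; apply/mnmP => j.
rewrite mnmDE mnmBE mnm1E; case: (i =P j) => [<-|] /=; lia.
Qed.

Lemma z_mono_exists g : ~ in_ideal (gens [:: @vx K; @vy K]) g -> exists k, g@_(mk (0, 0, k)%N) != 0.
Proof.
move=> Hg; apply: NNPP => H; apply: Hg.
rewrite (mpolyE g) big_seq; apply: in_ideal_sum => m Hm.
have Hgm : g@_m != 0 by rewrite -mcoeff_msupp.
case: (posnP (m i0)) => h0.
  case: (posnP (m i1)) => h1.
    exfalso; apply: H; exists (m i2).
    suff -> : mk (0, 0, m i2)%N = m by [].
    by rewrite -[RHS]trK /tr h0 h1.
  rewrite (Xsplit h1) scalerAr mulrC; apply: in_idealM; apply: in_ideal_gen.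
  by rewrite /gens !inE /vy eqxx orbT.
rewrite (Xsplit h0) scalerAr mulrC; apply: in_idealM; apply: in_ideal_gen.
by rewrite /gens !inE /vx eqxx.
Qed.

Lemma part2_fwd f : primary_component_xy I f ->
  ideal_add (saturation_z I)
    (in_ideal (fun g => exists ux uy uz : nat, infB (ux, uy, uz) /\ g = mono ux uy 0)) f.
Proof.
move=> [g [Hgxy HI]].
have Hk := z_mono_exists Hgxy.
have Hbad := stepB_all HI Hk.
pose bad (m : 'X_{1..3}) := pb (~ good (tr m)).
exists (\sum_(m <- [seq m <- msupp f | bad m]) f@_m *: 'X_[m]).
exists (\sum_(m <- msupp f | ~~ bad m) f@_m *: 'X_[m]).
split; last split.
- apply: stepA => m; rewrite mem_filter => /andP [/pbP Hm _].
  rewrite big_filter_cond.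
  rewrite (eq_bigl (fun m' => pb (ap (tr m') (tr m)))).
    by have := Hbad _ Hm; rewrite phi_filter.
  move=> m'; rewrite /bad; case E: (pb (ap (tr m') (tr m))); rewrite ?andbF ?andbT //.
  apply/pbP => Hg'; apply: Hm; move/pbP: E => E; exact: Rr_good E Hg'.
- apply: in_ideal_sum => m /negP Hm.
  have Hgd : good (tr m) by apply: NNPP => H; apply: Hm; apply/pbP.
  have [uz Huz] := Hgd.
  rewrite -[m]trK -monoVE.
  have -> : monoV (tr m) = mono (m i0) (m i1) 0 * vz ^+ (m i2).
    by rewrite /monoV /mono /= expr0 mulr1.
  rewrite scalerAr mulrC; apply: in_idealM; apply: in_ideal_gen.
  by exists (m i0), (m i1), uz; split.
- by rewrite big_filter {1}(mpolyE f) (bigID bad) /=.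
Qed.

Hypothesis Hchar : [pchar K] =i pred0.

Definition ev (x : {mpoly K[3]}) : K := x.@[fun i : 'I_3 => if i == i2 then 2 else 0].

Lemma ev_xy G : in_ideal (gens [:: @vx K; @vy K]) G -> ev G = 0.
Proof.
move=> [n [c [g [Hg ->]]]]; rewrite /ev.
apply: (big_ind (fun x : {mpoly K[3]} => x.@[fun i : 'I_3 => if i == i2 then 2 else 0] = 0)).
- exact: meval0.
- by move=> x y Hx Hy; rewrite mevalD Hx Hy addr0.
move=> i _; rewrite mevalM; move: (Hg i); rewrite /gens !inE => /orP [] /eqP ->;
  by rewrite mevalXU /= mulr0.
Qed.

Lemma ev_vz n : ev (vz ^+ n) = 2 ^+ n.
Proof. by rewrite /ev rmorphXn /= mevalXU. Qed.

Lemma two_pow n : (2 : K) ^+ n = (2 ^ n)%:R.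
Proof. by rewrite natrX. Qed.

Lemma ev_vz_neq0 n : ev (vz ^+ n) != 0.
Proof.
rewrite ev_vz two_pow; move/pcharf0P: Hchar => ->.
by rewrite expn_eq0.
Qed.

Lemma Mg_witness g' : (exists ux uy uz : nat, infB (ux, uy, uz) /\ g' = mono ux uy 0) ->
  exists G, ev G != 0 /\ I (G * g').
Proof.
move=> [ux [uy [uz [Hinf ->]]]].
have [w [k [hk Hw1 Hw2]]] := periodic_or Hinf.
set u : V := (ux, uy, uz).
have Hc : conB u (addV u (zV k)).
  apply: (conB_trans Hw1); apply: (conB_trans Hw2).
  exact: conB_sym (conB_shift (zV k) Hw1).
exists (vz ^+ uz - vz ^+ (uz + k)); split.
  rewrite /ev rmorphB /= -/(ev _) -/(ev _) !ev_vz !two_pow -opprB oppr_eq0 -natrB; last first.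
    by rewrite leq_exp2l // leq_addr.
  move/pcharf0P: Hchar => ->; rewrite subn_eq0 -ltnNge ltn_exp2l //.
  by rewrite -{1}[uz]addn0 ltn_add2l.
have := conB_I Hc.
have -> : u = addV (ux, uy, 0%N) (zV uz) by rewrite /addV /zV /= !addn0.
rewrite addVzz !monoV_add !monoV_z -mulrBr mulrC.
by rewrite /monoV /=.
Qed.

Lemma witness_sum (J : Type) (sq : seq J) (P : pred J) (F : J -> {mpoly K[3]}) :
  (forall i, P i -> exists G, ev G != 0 /\ I (G * F i)) ->
  exists G, ev G != 0 /\ I (G * \sum_(i <- sq | P i) F i).
Proof.
move=> H; elim: sq => [|x sq [G [HG HI]]].
  by exists 1; rewrite big_nil mulr0 /ev rmorph1 oner_neq0; split => //; apply: in_ideal0.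
rewrite big_cons; case: ifP => Px //; last by exists G.
have [G' [HG' HI']] := H _ Px.
exists (G * G'); split; first by rewrite /ev rmorphM mulf_neq0.
rewrite mulrDr; apply: in_idealD.
  by rewrite -mulrA; apply: in_idealM.
by rewrite [G * G']mulrC -mulrA; apply: in_idealM.
Qed.

Lemma part2_back f :
  ideal_add (saturation_z I)
    (in_ideal (fun g => exists ux uy uz : nat, infB (ux, uy, uz) /\ g = mono ux uy 0)) f ->
  primary_component_xy I f.
Proof.
move=> [h [m [[n Hh] [[N [c [g [Hg ->]]]] ->]]]].
have [G [HG HI]] : exists G, ev G != 0 /\ I (G * \sum_(i < N) c i * g i).
  apply: witness_sum => i _.
  have [G [HG HI]] := Mg_witness (Hg i).
  by exists G; split => //; rewrite mulrCA; apply: in_idealM.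
exists (vz ^+ n * G); split.
  move/ev_xy/eqP; apply/negP; rewrite /ev rmorphM /= -/(ev _) -/(ev _) mulf_neq0 //.
  exact: ev_vz_neq0.
rewrite mulrDr; apply: in_idealD.
  by rewrite mulrAC mulrC; apply: in_idealM.
by rewrite -mulrA; apply: in_idealM.
Qed.
End Graph.

Theorem proposition4p3 (K : closedFieldType) (r s a b p q : nat) :
  [pchar K] =i pred0 ->
  (0 < r)%N -> (0 < s)%N -> (0 < a)%N -> (0 < b)%N ->
  (a <= b)%N -> (s <= r)%N ->
  (0 < p)%N -> (0 < q)%N -> coprime p q ->
  (* B is an integer matrix: lambda r and lambda s are integers *)
  (q %| p * r)%N -> (q %| p * s)%N ->
  (* B has rank 2 *)
  \rank (\matrix_(i < 3, j < 2)
           nth 0 (nth [::]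
             [:: [:: r%:Q; s%:Q];
                 [:: - (p%:Q / q%:Q) * r%:Q; - (p%:Q / q%:Q) * s%:Q];
                 [:: a%:Q; b%:Q]] i) j) = 2%N ->
  let lr := (p * r %/ q)%N in
  let ls := (p * s %/ q)%N in
  let I := @IB K r s a b lr ls in
  let c1 : int * int * int := (r%:Z, - lr%:Z, a%:Z) in
  let c2 : int * int * int := (s%:Z, - ls%:Z, b%:Z) in
  (forall ux uy : nat,
     (exists uz : int, infinite_vertex (edgeP I) (ux, uy, uz)) <->
     (exists uz : nat, infinite_vertex (edgeN I) (ux, uy, uz)))
  /\
  (forall f : {mpoly K[3]},
     primary_component_xy I f <->
     ideal_add (saturation_z I)
       (in_ideal (fun g => exists ux uy uz : nat,
                    infinite_vertex (edgeB c1 c2) (ux, uy, uz) /\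
                    g = mono ux uy 0)) f).
Proof.
move=> Hchar Hr Hs Ha Hb Hab Hsr Hp Hq Hcop Hdr Hds Hrank lr ls I c1 c2.
have Hlr : (lr * q = p * r)%N by rewrite /lr divnK.
have Hls : (ls * q = p * s)%N by rewrite /ls divnK.
split.
- move=> ux uy; split.
    move=> [uz Hinf]; exact: (@part1_fwd r s a b lr ls p q Hlr Hls Hp Hq K (ux, uy, uz) Hinf).
  move=> [uz Hinf]; exists (Posz uz).
  exact: (@part1_back r s a b lr ls p q Hlr Hls Hp Hq K ux uy uz Hinf).
- move=> f; split.
    move=> H; exact: (@part2_fwd r s a b lr ls p q Hlr Hls Hp Hq K f H).
  move=> H; exact: (@part2_back r s a b lr ls p q Hlr Hls Hp Hq K Hchar f H).
Qed.
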